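(* Let $M$ be a finite group with normal subgroups $K_0\leq K$, and let $E$ be a group acting on $M$ stabilizing $K$ and $K_0$. Let $\mathbb K\subseteq\mathrm{Irr}(K)$ be $ME$-stable. Assume: (i) $K=\operatorname{Z}(K)K_0$; (ii) there exists an $E$-stable subgroup $V\leq M$ such that (ii.1) $M=KV$ and $H:=V\cap K\leq\operatorname{Z}(K)$, and (ii.2) there exists a $VE$-equivariant extension map $\Lambda_0$ with respect to $H\lhd V$ for $\bigcup_{\lambda\in\mathbb K}\mathrm{Irr}(H\mid\lambda)$; (iii) with $\epsilon\colon V\to V/H$ the canonical surjection, there exists an $\epsilon(V)E$-equivariant extension map $\Lambda_\epsilon$ with respect to $K_0\lhd K_0\rtimes\epsilon(V)$ for $\bigcup_{\lambda\in\mathbb K}\mathrm{Irr}(K_0\mid\lambda)$. Then there exists an $ME$-equivariant extension map with respect to $K\lhd M$ for $\mathbb K$.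
   Context: An extension map with respect to $H\lhd G'$ for $\mathbb I\subseteq\mathrm{Irr}(H)$ is a map assigning to each $\varphi\in\mathbb I$ an extension of $\varphi$ to its stabilizer $G'_\varphi$; it is $X$-equivariant if it commutes with the action of $X$ by conjugation/automorphisms. $\mathrm{Irr}(H\mid\lambda)$ denotes the irreducible constituents of the restriction of $\lambda$ to $H$. In (iii), $V/H$ acts on $K_0$ since $H\le\operatorname{Z}(K)$ acts trivially, and $K_0\rtimes\epsilon(V)$ is the corresponding semidirect product. *)

(* Defs.v *)
From HB Require Import structures.
From mathcomp Require Import all_boot all_order all_algebra all_fingroup all_solvable all_field all_character.
Set Implicit Arguments.
Unset Strict Implicit.
Unset Printing Implicit Defensive.
Import GRing.Theory Num.Theory.
Local Open Scope group_scope.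

Definition ext_map (gT : finGroupType) (G H : {group gT})
    (I : 'CF(H) -> Prop) (L : forall phi : 'CF(H), 'CF(('I_G[phi])%G)) : Prop :=
  forall phi, I phi -> L phi \is a character /\ ('Res[H] (L phi))%R = phi.

(* X-equivariance for X acting by conjugation: L (phi ^ x) = (L phi) ^ x,
   written pointwise: (L (phi ^ x)) (g ^ x) = (L phi) g. *)
Definition conj_equivariant (gT : finGroupType) (G H : {group gT}) (X : {set gT})
    (I : 'CF(H) -> Prop) (L : forall phi : 'CF(H), 'CF(('I_G[phi])%G)) : Prop :=
  forall phi, I phi -> forall x, x \in X -> forall g : gT,
    L (phi ^ x)%CF (g ^ x) = L phi g.

Definition Irr_under (gT : finGroupType) (H K : {group gT}) (lam : 'CF(K))
    (psi : 'CF(H)) : Prop :=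
  exists2 i : Iirr H, psi = ('chi_i)%R & i \in irr_constt ('Res[H] lam)%R.

Section ExternalSdprod.
Variables (aT rT : finGroupType) (D : {group aT}) (R : {group rT}).
Variable to : groupAction D R.

Lemma sdpair1_isom : isom R (sdpair1 to @* R) (sdpair1 to).
Proof. by apply/isomP; split; [exact: injm_sdpair1 | by []]. Qed.

Definition sdlift (psi : 'CF(R)) : 'CF(sdpair1 to @* R) :=
  cfIsom sdpair1_isom psi.

Definition sdmap (fa : aT -> aT) (fr : rT -> rT) (u : sdprod_by to) :
    sdprod_by to :=
  sdpair2 to (fa u.1) * sdpair1 to (fr u.2).
End ExternalSdprod.

Arguments ext_map {gT} G H I L.
Arguments conj_equivariant {gT} G H X I L.
Arguments Irr_under {gT} H K lam psi.
Arguments sdlift {aT rT D R} to psi.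
Arguments sdmap {aT rT D R to} fa fr u.

(* Main.v *)
Require Import Defs.
From HB Require Import structures.
From mathcomp Require Import all_boot all_order all_algebra all_fingroup all_solvable all_field all_character.
From Stdlib Require Import ClassicalEpsilon.
From mathcomp Require Import ring.
Import GRing.Theory Num.Theory.
Open Scope ring_scope.
Local Open Scope group_scope.

Lemma mult_lin_char (gT : finGroupType) (G : {group gT}) (f : gT -> algC) :
  f 1 = 1%R -> {in G &, forall x y, f (x * y) = (f x * f y)%R} ->
  exists2 xi : 'CF(G), xi \is a linear_char & {in G, forall x, xi x = f x}.
Proof.
move=> f1 fM.
pose rf x := (((f x)%:M)%R : 'M[algC]_(1,1)).
have rfP : mx_repr G rf.
  split=> [|x y Gx Gy]; first by rewrite /rf f1.
  by rewrite /rf fM // scalar_mxM.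
exists (cfRepr (MxRepresentation rfP)).
  by rewrite qualifE/= cfRepr_char cfRepr1 eqxx.
by move=> x Gx; rewrite cfunE Gx /= /rf mxtrace_scalar mulr1n.
Qed.

Lemma descend_char (aT rT : finGroupType) (G : {group aT})
    (f : {morphism G >-> rT}) (theta : 'CF(G)) :
  theta \is a character -> 'ker f \subset cfker theta ->
  exists2 eta : 'CF(f @* G), eta \is a character &
    {in G, forall x, eta (f x) = theta x}.
Proof.
move=> Nth sK.
have nkG := ker_norm f.
have skk: 'ker (coset ('ker f)) \subset 'ker f by rewrite ker_coset.
pose g := factm_morphism skk nkG.
have injg : 'injm g by rewrite ker_factm -quotientE trivg_quotient.
have img : g @* (G / 'ker f) = f @* G by rewrite morphim_factm.
have iso : isom (G / 'ker f) (f @* G) g by apply/isomP.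
exists (cfIsom iso (theta / 'ker f)%CF).
  by rewrite cfIsom_char cfQuo_char.
move=> x Gx.
have Nx : x \in 'N('ker f) by rewrite (subsetP nkG).
rewrite -[f x](factmE skk nkG) //.
rewrite cfIsomE ?mem_quotient //.
by rewrite cfQuoE ?ker_normal.
Qed.

Lemma center_scalar (gT : finGroupType) (G : {group gT}) n
   (rG : mx_representation algC G n) z :
  cfRepr rG \in irr G -> z \in 'Z(G) -> is_scalar_mx (rG z).
Proof.
case/irrP=> i Hi Zz.
have : z \in 'Z(cfRepr rG)%CF.
  by rewrite Hi; rewrite -cap_cfcenter_irr in Zz; move/bigcapP: Zz; apply.
by rewrite cfcenter_repr inE => /andP[].
Qed.

Lemma irr_center_mul (gT : finGroupType) (G : {group gT}) (chi : 'CF(G)) z g :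
  chi \in irr G -> z \in 'Z(G) -> g \in G ->
  (chi (z * g)%g * chi 1%g = chi z * chi g)%R.
Proof.
move=> Ichi Zz Gg; have Gz : z \in G by case/setIP: Zz.
have [rG _ Dchi] := irr_reprP Ichi.
have Ir : cfRepr rG \in irr G by rewrite -Dchi.
have /is_scalar_mxP[c rz] := @center_scalar _ _ _ rG z Ir Zz.
rewrite Dchi !cfunE groupM // Gz Gg group1 /= !mulr1n repr_mxM // rz repr_mx1.
rewrite mul_scalar_mx mxtraceZ !mxtrace_scalar.
by rewrite mulrAC mulr_natr.
Qed.

Lemma Res_irr_center (gT : finGroupType) (G K0 : {group gT}) (chi : 'CF(G)) :
  chi \in irr G -> K0 \subset G -> G \subset 'Z(G) * K0 ->
  'Res[K0] chi \in irr K0.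
Proof.
move=> Ichi sK0G sGZK.
have [rG irrG Dchi] := irr_reprP Ichi.
apply/irr_reprP; exists (Representation (subg_repr rG sK0G)); last first.
  by rewrite Dchi cfRepr_sub.
case/mx_irrP: irrG => npos irrG; apply/mx_irrP; split => // U modU nzU.
apply: irrG nzU; apply/mxmoduleP => x Gx.
have /mulsgP[z k Zz Kk ->] := subsetP sGZK x Gx.
have Gz : z \in G by case/setIP: Zz.
have Ir : cfRepr rG \in irr G by rewrite -Dchi.
have /is_scalar_mxP[c rz] := @center_scalar _ _ _ rG z Ir Zz.
rewrite (repr_mxM rG Gz (subsetP sK0G k Kk)) rz mul_scalar_mx.
rewrite -scalemxAr; apply: scalemx_sub.
by move/mxmoduleP: modU => /(_ k Kk).
Qed.
Arguments irr_center_mul {gT G chi z g}.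
Arguments Res_irr_center {gT G K0 chi}.
Arguments mult_lin_char {gT G f}.
Arguments descend_char {aT rT G f theta}.

Section Main.
Variables (gT : finGroupType) (M K K0 E V H : {group gT}) (KK : pred 'CF(K)).
Hypotheses (nKM : K <| M) (nK0M : K0 <| M) (sK0K : K0 \subset K)
  (nME : E \subset 'N(M)) (nKE : E \subset 'N(K)) (nK0E : E \subset 'N(K0))
  (KK_irr : forall chi, chi \in KK -> chi \in irr K)
  (KK_stable : forall chi x, chi \in KK -> x \in M <*> E -> (chi ^ x)%CF \in KK)
  (hi : K :=: 'Z(K) * K0)
  (nVE : E \subset 'N(V))
  (defM : M :=: K * V) (defH : H :=: V :&: K) (sHZ : H \subset 'Z(K)).
Variable (nVK0 : {acts (V / H), on group K0 | ('J %% H)%gact}).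
Local Notation to := <[nVK0]>%gact.
Local Notation sdT := (sdprod_by to).

Definition I0 := fun psi : 'CF(H) => exists2 lam, lam \in KK & Irr_under H K lam psi.
Definition Ieps := fun psi : 'CF(K0) => exists2 lam, lam \in KK & Irr_under K0 K lam psi.
Definition Ieps' := fun phi => exists2 psi, Ieps psi & phi = sdlift to psi.

Variable L0 : forall psi : 'CF(H), 'CF(('I_V[psi])%G).
Hypotheses (L0ext : ext_map V H I0 L0) (L0eq : conj_equivariant V H (V <*> E) I0 L0).
Variable Leps : forall phi : 'CF(sdpair1 to @* K0), 'CF(('I_[set: sdT][phi])%G).
Hypotheses (Lext : ext_map [set: sdT]%G _ Ieps' Leps)
  (Leq : conj_equivariant _ _ (sdpair2 to @* (V / H)) Ieps' Leps)
  (LeqE : forall psi, Ieps psi -> forall e, e \in E -> forall s,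
           Leps (sdlift to (psi ^ e)%CF)
                (sdmap (fun a => a ^ coset H e) (fun x => x ^ e) s)
           = Leps (sdlift to psi) s).

Lemma sKM : K \subset M. Proof. exact: normal_sub. Qed.
Lemma sVM : V \subset M. Proof. by rewrite defM mulG_subr. Qed.
Lemma nKM' : M \subset 'N(K). Proof. exact: normal_norm. Qed.
Lemma nK0M' : M \subset 'N(K0). Proof. exact: normal_norm. Qed.
Lemma sHV : H \subset V. Proof. by rewrite defH subsetIl. Qed.
Lemma sHK : H \subset K. Proof. by rewrite defH subsetIr. Qed.
Lemma nHV : V \subset 'N(H).
Proof. by rewrite defH normsI ?normG // (subset_trans sVM nKM'). Qed.
Lemma nHE : E \subset 'N(H).
Proof. by rewrite defH normsI. Qed.
Lemma nZM : M \subset 'N('Z(K)).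
Proof. exact: char_norm_trans (center_char K) nKM'. Qed.
Lemma nZE : E \subset 'N('Z(K)).
Proof. exact: char_norm_trans (center_char K) nKE. Qed.
Lemma sZK : 'Z(K) \subset K. Proof. exact: center_sub. Qed.
Lemma cZK0 : K0 \subset 'C('Z(K)).
Proof. by rewrite centsC (subset_trans (subsetIr _ _)) ?centS. Qed.
Lemma nK0V : V \subset 'N(K0). Proof. exact: subset_trans sVM nK0M'. Qed.
Lemma nKV : V \subset 'N(K). Proof. exact: subset_trans sVM nKM'. Qed.
Lemma nZV : V \subset 'N('Z(K)). Proof. exact: subset_trans sVM nZM. Qed.

Definition om (chi : 'CF(K)) (z : gT) : algC := (chi z / chi 1%g)%R.
Definition mu (chi : 'CF(K)) : 'CF(H) := ((chi 1%g)^-1 *: 'Res[H] chi)%R.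

Section Chi.
Variable chi : 'CF(K).
Hypothesis KKchi : chi \in KK.

Lemma chi_irr : chi \in irr K. Proof. exact: KK_irr. Qed.
Lemma chi1_neq0 : chi 1%g != 0%R.
Proof. by case/irrP: chi_irr => i ->; apply: irr1_neq0. Qed.

Lemma om_mulg z g : z \in 'Z(K) -> g \in K -> chi (z * g)%g = (om chi z * chi g)%R.
Proof.
move=> Zz Kg; have := irr_center_mul chi_irr Zz Kg.
by rewrite /om mulrAC => <-; rewrite mulfK ?chi1_neq0.
Qed.

Lemma om1 : om chi 1%g = 1%R.
Proof. by rewrite /om divff ?chi1_neq0. Qed.

Lemma om_morph z z' : z \in 'Z(K) -> z' \in 'Z(K) -> om chi (z * z')%g = (om chi z * om chi z')%R.
Proof.
move=> Zz Zz'; by rewrite /om om_mulg ?(subsetP sZK) // /om mulrA.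
Qed.

Lemma omJ x z : x \in 'N(K) -> om (chi ^ x)%CF (z ^ x) = om chi z.
Proof. by move=> nx; rewrite /om cfConjgEJ // cfConjg1. Qed.

Lemma psi_irr : 'Res[K0] chi \in irr K0.
Proof. by apply: Res_irr_center chi_irr sK0K _; rewrite -hi. Qed.

Lemma Ieps_psi : Ieps ('Res[K0] chi).
Proof.
exists chi => //; have /irrP[i Di] := psi_irr; exists i => //.
by rewrite irr_consttE -Di (irrWnorm psi_irr) oner_eq0.
Qed.

Lemma muE h : h \in H -> mu chi h = om chi h.
Proof. by move=> Hh; rewrite /mu cfunE cfResE ?sHK // mulrC. Qed.

Lemma mu_lin : mu chi \is a linear_char.
Proof.
have [xi Lxi xiE] : exists2 xi : 'CF(H), xi \is a linear_char & {in H, forall x, xi x = om chi x}.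
  apply: mult_lin_char; first exact: om1.
  by move=> x y Hx Hy; apply: om_morph; apply: (subsetP sHZ).
suff -> : mu chi = xi by [].
by apply/cfun_inP=> h Hh; rewrite muE // xiE.
Qed.

Lemma mu1 : mu chi 1%g = 1%R.
Proof. by rewrite muE // om1. Qed.

Lemma I0_mu : I0 (mu chi).
Proof.
exists chi => //; have /irrP[i Di] := lin_char_irr mu_lin; exists i => //.
have -> : 'Res[H] chi = (chi 1%g *: mu chi)%R by rewrite /mu scalerA divff ?scale1r ?chi1_neq0.
by rewrite irr_consttE cfdotZl -Di (irrWnorm (lin_char_irr (mu_lin))) mulr1 chi1_neq0.
Qed.
End Chi.

Lemma cK0H : K0 \subset 'C(H).
Proof. by rewrite centsC (subset_trans sHZ) // centsC cZK0. Qed.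

Lemma toE k c : k \in K0 -> c \in V -> to k (coset H c) = k ^ c.
Proof.
move=> Kk Vc; rewrite actbyE ?mem_quotient //= modactE ?in_setT ?(subsetP nHV) //.
rewrite setTI afixJ; exact: (subsetP cK0H).
Qed.

Lemma sdliftE (p : 'CF(K0)) k : k \in K0 -> sdlift to p (sdpair1 to k) = p k.
Proof. by move=> Kk; rewrite /sdlift cfIsomE. Qed.

Lemma sdpair2_norm c : c \in V -> sdpair2 to (coset H c) \in 'N(sdpair1 to @* K0).
Proof.
move=> Vc; apply: (subsetP (im_sdpair_norm to)).
by rewrite mem_morphim ?mem_quotient.
Qed.

Lemma lift_conj (p : 'CF(K0)) c : c \in V ->
  ((sdlift to p) ^ (sdpair2 to (coset H c)))%CF = sdlift to (p ^ c)%CF.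
Proof.
move=> Vc; apply/cfun_inP=> x /morphimP[k _ Kk ->].
rewrite cfConjgE ?sdpair2_norm // sdliftE // cfConjgE ?(subsetP nK0V) //.
rewrite -morphV ?mem_quotient // -sdpair_act ?groupV ?mem_quotient //.
by rewrite -morphV ?(subsetP nHV) // toE ?groupV // sdliftE ?memJ_norm ?groupV ?(subsetP nK0V).
Qed.

Lemma sd12 a k : a \in V / H -> k \in K0 ->
  sdpair1 to k * sdpair2 to a = sdpair2 to a * sdpair1 to (to k a).
Proof. by move=> Da Kk; rewrite sdpair_act // conjgC. Qed.
Lemma K0_conj0 {k c} : k \in K0 -> c \in V -> k ^ c \in K0.
Proof. by move=> Kk Vc; rewrite memJ_norm // (subsetP nK0V). Qed.

Lemma sd21 c k : c \in V -> k \in K0 ->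
  sdpair2 to (coset H c) * sdpair1 to k = sdpair1 to (k ^ c^-1) * sdpair2 to (coset H c).
Proof.
move=> Vc Kk; have Kk' : k ^ c^-1 \in K0 by rewrite memJ_norm // groupV (subsetP nK0V).
by rewrite sd12 ?mem_quotient // toE // conjgKV.
Qed.

Lemma sd21_val {a y} : a \in V / H -> y \in K0 ->
  (sdpair2 to a * sdpair1 to y).1 = a /\ (sdpair2 to a * sdpair1 to y).2 = y.
Proof.
move=> Da Ky.
suff: forall u : sdT, u = sdpair2 to a * sdpair1 to y -> u.1 = a /\ u.2 = y by apply.
move=> u Hu.
have e := sdpairE u; rewrite {1}Hu in e.
have Du : u.1 \in V / H by case: (u) => [[b z]] /= /setXP[].
have Ru : u.2 \in K0 by case: (u) => [[b z]] /= /setXP[].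
move: (u.1) (u.2) Du Ru e => u1 u2 Du Ru e.
have e2 : (sdpair2 to u1)^-1 * sdpair2 to a = sdpair1 to u2 * (sdpair1 to y)^-1.
  by rewrite -[sdpair2 to a](mulgK (sdpair1 to y)) e !mulgA mulVg mul1g.
have : (sdpair2 to u1)^-1 * sdpair2 to a \in (sdpair1 to @* K0) :&: (sdpair2 to @* (V / H)).
  by rewrite inE {1}e2 !groupM ?groupV ?mem_morphim.
rewrite im_sdpair_TI inE => /eqP e3.
have e4 : sdpair2 to u1 = sdpair2 to a by apply/eqP; rewrite eq_mulVg1 e3.
have e5 : sdpair1 to u2 = sdpair1 to y by apply/eqP; rewrite eq_mulgV1 -e2 e3.
split; [exact: (injmP (injm_sdpair2 to)) | exact: (injmP (injm_sdpair1 to))].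
Qed.

Lemma twistE (a a' c c' : gT) :
  (a * a') * (c * c')^-1 = (a * c^-1) * (a' * c'^-1) ^ c^-1.
Proof. by rewrite conjgE invgK invMg !mulgA mulgKV. Qed.

Lemma phiM_alg (z k c z' k' c' : gT) :
  commute (z' ^ c^-1) k ->
  z * z' ^ c^-1 * (k * k' ^ c^-1) * (c * c') = z * k * c * (z' * k' * c').
Proof.
move=> ck.
rewrite (mulgA (z * _) k) -(mulgA z _ k) ck.
by rewrite !conjgE !invgK !mulgA !mulgKV.
Qed.

Definition Pspec (chi : 'CF(K)) (th : 'CF(('I_M[chi])%G)) : Prop :=
  th \is a character /\ forall z k v, z \in 'Z(K) -> k \in K0 -> v \in V :&: 'I_M[chi] ->
   th (z * k * v) = (om chi z * Leps (sdlift to ('Res[K0] chi))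
                       (sdpair1 to k * sdpair2 to (coset H v))%g * L0 (mu chi) v)%R.

Section Exist.
Variable chi : 'CF(K).
Hypothesis KKchi : chi \in KK.

Definition VT := V :&: 'I_M[chi].

Definition Xset : {set (gT * gT) * gT} :=
  [set u | [&& u.2 \in VT, (u.1.1 * u.2^-1) \in 'Z(K) & (u.1.2 * u.2^-1) \in K0]].

Lemma VT_V {c} : c \in VT -> c \in V. Proof. by case/setIP. Qed.
Lemma VT_I {c} : c \in VT -> c \in 'I_M[chi]. Proof. by case/setIP. Qed.

Lemma Xset_group : group_set Xset.
Proof.
apply/group_setP; split.
  by rewrite inE /= !(invg1, mulg1) !group1.
move=> u v; rewrite inE => /and3P[cu zu ku]; rewrite inE => /and3P[cv zv kv].
have Vc := VT_V cu.
have VTcc : u.2 * v.2 \in VT by rewrite /VT inE groupM ?VT_V // groupM ?VT_I.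
rewrite inE /= VTcc /=.
rewrite !twistE groupM // ?memJ_norm ?groupV // ?(subsetP nZV) // /= groupM // memJ_norm ?groupV // (subsetP nK0V) //.
Qed.
Canonical X := Group Xset_group.

Definition phiX (u : (gT * gT) * gT) : gT := (u.1.1 * u.2^-1) * (u.1.2 * u.2^-1) * u.2.

Lemma X_inv {u} : u \in X ->
  [/\ u.2 \in VT, (u.1.1 * u.2^-1) \in 'Z(K) & (u.1.2 * u.2^-1) \in K0].
Proof. by rewrite inE => /and3P[]. Qed.

Lemma Z_conj z c : z \in 'Z(K) -> c \in V -> z ^ c^-1 \in 'Z(K).
Proof. by move=> Zz Vc; rewrite memJ_norm // groupV (subsetP nZV). Qed.

Lemma K0_conj k c : k \in K0 -> c \in V -> k ^ c^-1 \in K0.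
Proof. by move=> Kk Vc; rewrite memJ_norm // groupV (subsetP nK0V). Qed.

Lemma commZK0 z k : z \in 'Z(K) -> k \in K0 -> commute z k.
Proof.
move=> /setIP[_ cKz] Kk; apply: (centP cKz).
exact: (subsetP sK0K).
Qed.

Lemma phiXM : {in X &, {morph phiX : u v / u * v}}.
Proof.
move=> u v /X_inv[cu zu ku] /X_inv[cv zv kv].
rewrite /phiX /= !twistE; apply: phiM_alg; apply: commZK0 => //.
exact: Z_conj (VT_V cu).
Qed.
Canonical phiX_morph := Morphism phiXM.

Definition rhoX (u : (gT * gT) * gT) : sdT :=
  sdpair1 to (u.1.2 * u.2^-1) * sdpair2 to (coset H u.2).

Lemma rhoXM : {in X &, {morph rhoX : u v / u * v}}.
Proof.
move=> u v /X_inv[cu zu ku] /X_inv[cv zv kv].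
have Vc := VT_V cu; have Vc' := VT_V cv.
have Nc := subsetP nHV _ Vc; have Nc' := subsetP nHV _ Vc'.
rewrite /rhoX /= twistE [sdpair1 to (_ * _ ^ _)]sdpair1_morphM ?K0_conj //.
rewrite (morphM (coset_morphism H) Nc Nc') /=.
rewrite [sdpair2 to (coset H _ * _)]sdpair2_morphM ?mem_quotient //.
by rewrite -!mulgA; congr (_ * _); rewrite [RHS]mulgA sd21 // mulgA.
Qed.
Canonical rhoX_morph := Morphism rhoXM.

Definition piX (u : (gT * gT) * gT) : gT := u.2.
Lemma piXM : {in X &, {morph piX : u v / u * v}}. Proof. by []. Qed.
Canonical piX_morph := Morphism piXM.

Definition omX (u : (gT * gT) * gT) : algC := om chi (u.1.1 * u.2^-1).

Lemma omXM : {in X &, forall u v, omX (u * v) = (omX u * omX v)%R}.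
Proof.
move=> u v /X_inv[cu zu ku] /X_inv[cv zv kv].
rewrite /omX /= twistE om_morph // ?Z_conj ?(VT_V cu) //; congr (_ * _)%R.
have /setIP[_ Ic] := VT_I cu.
by rewrite /om (inertia_valJ _ (groupVr Ic)).
Qed.

Lemma omX1 : omX 1 = 1%R.
Proof. by rewrite /omX /= invg1 mulg1 om1. Qed.

Lemma psiJ c : c \in VT -> (('Res[K0] chi) ^ c)%CF = 'Res[K0] chi.
Proof.
move=> cT; have Vc := VT_V cT; have /setIP[_ Ic] := VT_I cT.
rewrite cfConjgRes_norm ?(subsetP nK0V) ?(subsetP nKV) //.
by rewrite inertiaJ.
Qed.

Lemma muJ c : c \in VT -> ((mu chi) ^ c)%CF = mu chi.
Proof.
move=> cT; have Vc := VT_V cT; have /setIP[_ Ic] := VT_I cT.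
rewrite /mu linearZ /= cfConjgRes_norm ?(subsetP nHV) ?(subsetP nKV) //.
by rewrite inertiaJ.
Qed.

Lemma rhoX_I : rhoX_morph @* X \subset 'I_[set: sdT][sdlift to ('Res[K0] chi)].
Proof.
apply/subsetP=> _ /morphimP[u _ Xu ->]; have [cu zu ku] := X_inv Xu.
have Vc := VT_V cu.
rewrite /= /rhoX inE in_setT /=; apply: groupM.
  by apply: (subsetP (sub_inertia _)); rewrite mem_morphim.
rewrite inE sdpair2_norm //= lift_conj //.
by rewrite psiJ.
Qed.

Lemma piX_I : piX_morph @* X \subset 'I_V[mu chi].
Proof.
apply/subsetP=> _ /morphimP[u _ Xu ->]; have [cu zu ku] := X_inv Xu.
have Vc := VT_V cu.
rewrite /= /piX inE Vc inE (subsetP nHV) //=.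
by rewrite muJ.
Qed.

Definition lp := sdlift to ('Res[K0] chi).

Lemma Ieps'_lp : Ieps' lp.
Proof. by exists ('Res[K0] chi) => //; apply: Ieps_psi. Qed.

Lemma Lp_char : Leps lp \is a character.
Proof. by case: (Lext _ Ieps'_lp). Qed.

Lemma Lm_char : L0 (mu chi) \is a character.
Proof. by case: (L0ext _ (I0_mu _ KKchi)). Qed.

Lemma Lp_K0 {k} : k \in K0 -> Leps lp (sdpair1 to k) = chi k.
Proof.
move=> Kk; case: (Lext _ Ieps'_lp) => _ eR.
have Sk : sdpair1 to k \in sdpair1 to @* K0 by rewrite mem_morphim.
rewrite -(cfResE _ _ Sk); last exact: sub_Inertia (subsetT _).
by rewrite eR /lp sdliftE // cfResE.
Qed.

Lemma Lm_H {h} : h \in H -> L0 (mu chi) h = om chi h.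
Proof.
move=> Hh; case: (L0ext _ (I0_mu _ KKchi)) => _ eR.
rewrite -(cfResE _ _ Hh); last exact: sub_Inertia sHV.
by rewrite eR muE.
Qed.

Lemma omX_lin : exists2 xi : 'CF(X), xi \is a linear_char & {in X, forall u, xi u = omX u}.
Proof. apply: mult_lin_char; [exact: omX1 | exact: omXM]. Qed.

Lemma exists_thetaX : exists2 th : 'CF(X), th \is a character &
  {in X, forall u, th u = (omX u * Leps lp (rhoX u) * L0 (mu chi) (piX u))%R}.
Proof.
have [xi Lxi xiE] := omX_lin.
exists (xi * cfMorph ('Res[rhoX_morph @* X] (Leps lp)) * cfMorph ('Res[piX_morph @* X] (L0 (mu chi))))%R.
  apply: rpredM; first apply: rpredM.
  - exact: lin_charW.
  - by apply: cfMorph_char; apply: cfRes_char; exact: Lp_char.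
  - by apply: cfMorph_char; apply: cfRes_char; exact: Lm_char.
move=> u Xu; rewrite !cfunE xiE // !cfMorphE // !cfResE ?mem_morphim //.
  exact: piX_I.
exact: rhoX_I.
Qed.

Lemma sKT : K \subset 'I_M[chi].
Proof. exact: sub_Inertia sKM. Qed.

Lemma decompT g : g \in 'I_M[chi] ->
  exists z, exists k, exists v, [/\ z \in 'Z(K), k \in K0, v \in VT & g = z * k * v].
Proof.
move=> Tg; have /setIP[Mg _] := Tg.
rewrite defM in Mg; case/mulsgP: Mg => k1 v Kk1 Vv def_g.
have Kk1' := Kk1; rewrite hi in Kk1'; case/mulsgP: Kk1' => z k Zz Kk def_k1.
exists z, k, v; split => //; last by rewrite def_g def_k1.
rewrite /VT inE Vv /=.
have -> : v = k1^-1 * g by rewrite def_g mulKg.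
by rewrite groupM ?groupV // (subsetP sKT).
Qed.

Lemma exists_Pspec : exists th, Pspec chi th.
Proof.
have [th Nth thE] := exists_thetaX.
have X1 : (1 : (gT * gT) * gT) \in X by rewrite group1.
have sker : 'ker phiX_morph \subset cfker th.
  apply/subsetP => u; rewrite kerE => /morphpreP[Xu /set1P phi1].
  have [cu zu ku] := X_inv Xu; have Vc := VT_V cu.
  rewrite cfkerEchar // inE Xu thE // thE //.
  have Lp1 : Leps lp 1 = chi 1%g by rewrite -(Lp_K0 (group1 K0)) morph1.
  have Lm1 : L0 (mu chi) 1 = 1%R by rewrite Lm_H ?group1 // om1.
  rewrite /omX /rhoX /piX /= !(invg1, mulg1) !morph1 mulg1 (om1 _ KKchi) mul1r Lp1 Lm1 mulr1.
  move: phi1; rewrite /= /phiX.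
  set z := u.1.1 * u.2^-1; set k := u.1.2 * u.2^-1; set c := u.2 => phi1.
  have ec : c = (z * k)^-1 by apply/eqP; rewrite eq_sym eq_invg_mul phi1.
  have Kc : c \in K.
    by rewrite ec groupV (groupM (subsetP sZK _ zu) (subsetP sK0K _ ku)).
  have Hc : c \in H by rewrite defH inE Vc.
  have Zc : c \in 'Z(K) by apply: (subsetP sHZ).
  have ek : k = z^-1 * c^-1 by rewrite ec invgK mulKg.
  have Zk : k \in 'Z(K) by rewrite ek groupM ?groupV.
  rewrite coset_id // morph1 mulg1 Lp_K0 // Lm_H //.
  rewrite -[k]mulg1 (om_mulg _ KKchi _ _ Zk (group1 K)).
  have e : (om chi z * om chi k * om chi c = 1)%R.
    by rewrite -(om_morph _ KKchi _ _ zu Zk) -(om_morph _ KKchi _ _ (groupM zu Zk) Zc) phi1 (om1 _ KKchi).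
  by apply/eqP; rewrite -[RHS]mul1r -e; ring.
have [eta Neta etaE] := descend_char Nth sker.
have sT : 'I_M[chi] \subset phiX_morph @* X.
  apply/subsetP=> g /decompT[z [k [v [Zz Kk VTv ->]]]].
  have Xu : ((z * v, k * v), v) \in X by rewrite inE /= !mulgK VTv Zz Kk.
  have -> : z * k * v = phiX ((z * v, k * v), v) by rewrite /phiX /= !mulgK.
  exact: (mem_morphim phiX_morph Xu Xu).
exists ('Res['I_M[chi]] eta); split; first exact: cfRes_char.
move=> z k v Zz Kk VTv.
have Tg : z * k * v \in 'I_M[chi].
  by rewrite !groupM ?(subsetP sKT _ (subsetP sZK _ Zz)) ?(subsetP sKT _ (subsetP sK0K _ Kk)) ?VT_I.
have Xu : ((z * v, k * v), v) \in X by rewrite inE /= !mulgK VTv Zz Kk.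
rewrite (cfResE _ sT Tg).
have -> : z * k * v = phiX ((z * v, k * v), v) by rewrite /phiX /= !mulgK.
by rewrite (etaE _ Xu) (thE _ Xu) /omX /rhoX /piX /= !mulgK.
Qed.

End Exist.

Definition Lf (chi : 'CF(K)) : 'CF(('I_M[chi])%G) := epsilon (inhabits 0%R) (Pspec chi).

Lemma Lf_spec chi : chi \in KK -> Pspec chi (Lf chi).
Proof. by move=> KKchi; apply: epsilon_spec; apply: exists_Pspec. Qed.

Lemma Lf_ext : ext_map M K (fun chi => chi \in KK) Lf.
Proof.
move=> chi KKchi; have [NL SL] := Lf_spec _ KKchi; split => //.
apply/cfun_inP=> g Kg; rewrite cfResE ?(sKT chi) //.
have Kg' := Kg; rewrite hi in Kg'; case/mulsgP: Kg' => z k Zz Kk ->.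
have V1 : (1 : gT) \in V :&: 'I_M[chi] by rewrite group1.
rewrite -[z * k]mulg1 SL // !morph1 !mulg1 -[sdlift to _]/(lp chi) (Lp_K0 _ KKchi Kk) (Lm_H _ KKchi (group1 H)).
by rewrite (om1 _ KKchi) mulr1 (om_mulg _ KKchi _ _ Zz (subsetP sK0K _ Kk)).
Qed.

Lemma inertJ (chi : 'CF(K)) x : x \in 'N(M) -> x \in 'N(K) ->
  'I_M[(chi ^ x)%CF] = 'I_M[chi] :^ x.
Proof. by move=> nM nK; rewrite conjIg (normP nM) conjg_inertia. Qed.

Lemma muJx (chi : 'CF(K)) x : x \in 'N(K) -> x \in 'N(H) ->
  mu (chi ^ x)%CF = ((mu chi) ^ x)%CF.
Proof.
move=> nK nH; rewrite /mu linearZ /= cfConjg1 cfConjgRes_norm //.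
Qed.

Definition LepsH x := forall chi, chi \in KK -> forall k v, k \in K0 -> v \in V ->
  Leps (sdlift to (('Res[K0] chi) ^ x)%CF) (sdpair1 to (k ^ x) * sdpair2 to (coset H (v ^ x)))
  = Leps (sdlift to ('Res[K0] chi)) (sdpair1 to k * sdpair2 to (coset H v)).

Lemma equiv_gen x : x \in M <*> E -> x \in V <*> E -> x \in 'N(M) -> x \in 'N(K) ->
  x \in 'N(K0) -> x \in 'N(H) -> x \in 'N(V) -> x \in 'N('Z(K)) -> LepsH x ->
  forall chi, chi \in KK -> forall g, Lf (chi ^ x)%CF (g ^ x) = Lf chi g.
Proof.
move=> MEx VEx nM nK nK0 nH nV nZ LH chi KKchi g.
have KK' := KK_stable _ _ KKchi MEx.
have TJ := inertJ chi x nM nK.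
have [Tg | nTg] := boolP (g \in 'I_M[chi]); last first.
  have nTg' : g ^ x \notin 'I_M[(chi ^ x)%CF] by rewrite TJ memJ_conjg.
  by rewrite (cfun0 _ nTg) (cfun0 _ nTg').
have [z [k [v [Zz Kk VTv ->]]]] := decompT _ _ Tg.
have [_ S'] := Lf_spec _ KK'; have [_ S] := Lf_spec _ KKchi.
have Vv : v \in V by case/setIP: VTv.
have Zx : z ^ x \in 'Z(K) by rewrite memJ_norm.
have Kx : k ^ x \in K0 by rewrite memJ_norm.
have VTx : v ^ x \in V :&: 'I_M[(chi ^ x)%CF].
  by rewrite inE memJ_norm // TJ memJ_conjg; case/setIP: VTv => -> ->.
rewrite !conjMg (S' _ _ _ Zx Kx VTx).
rewrite S // omJ // -cfConjgRes_norm // LH // muJx //.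
by rewrite (L0eq _ (I0_mu _ KKchi) _ VEx).
Qed.
Lemma LepsH_V x : x \in V -> LepsH x.
Proof.
move=> Vx chi KKchi k v Kk Vv.
have Nx := subsetP nHV _ Vx; have Nv := subsetP nHV _ Vv.
rewrite -lift_conj //.
have -> : sdpair1 to (k ^ x) * sdpair2 to (coset H (v ^ x))
   = (sdpair1 to k * sdpair2 to (coset H v)) ^ sdpair2 to (coset H x).
  rewrite conjMg -sdpair_act ?mem_quotient // toE //.
  by rewrite -morphJ ?mem_quotient // -morphJ.
apply: Leq; first by exists ('Res[K0] chi) => //; apply: Ieps_psi.
by rewrite mem_morphim ?mem_quotient.
Qed.

Lemma LepsH_E e : e \in E -> LepsH e.
Proof.
move=> Ee chi KKchi k v Kk Vv.
have Ne := subsetP nHE _ Ee; have Nv := subsetP nHV _ Vv.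
have Ve : v ^ e \in V by rewrite memJ_norm // (subsetP nVE).
have Ke : k ^ e \in K0 by rewrite memJ_norm // (subsetP nK0E).
rewrite -(LeqE _ (Ieps_psi _ KKchi) _ Ee (sdpair1 to k * sdpair2 to (coset H v))).
congr (Leps _ _).
have [e1 e2] := sd21_val (mem_quotient H Vv) (K0_conj0 Kk Vv).
rewrite sd12 ?mem_quotient // /sdmap.
rewrite sd12 ?mem_quotient // toE // toE // e1 e2.
by rewrite -(morphJ (coset_morphism H) Nv Ne) [(k ^ v) ^ e]conjJg.
Qed.

Lemma equiv_E e : e \in E -> forall chi, chi \in KK -> forall g,
  Lf (chi ^ e)%CF (g ^ e) = Lf chi g.
Proof.
move=> Ee; apply: equiv_gen; last exact: LepsH_E.
- exact: (subsetP (joing_subr M E)).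
- exact: (subsetP (joing_subr V E)).
- exact: (subsetP nME).
- exact: (subsetP nKE).
- exact: (subsetP nK0E).
- exact: (subsetP nHE).
- exact: (subsetP nVE).
- exact: (subsetP nZE).
Qed.

Lemma equiv_V v : v \in V -> forall chi, chi \in KK -> forall g,
  Lf (chi ^ v)%CF (g ^ v) = Lf chi g.
Proof.
move=> Vv; have Mv := subsetP sVM _ Vv.
apply: equiv_gen; last exact: LepsH_V.
- exact: (subsetP (joing_subl M E)).
- exact: (subsetP (joing_subl V E)).
- exact: (subsetP (normG M)).
- exact: (subsetP nKV).
- exact: (subsetP nK0V).
- exact: (subsetP nHV).
- exact: (subsetP (normG V)).
- exact: (subsetP nZV).
Qed.

Lemma equiv_K k : k \in K -> forall chi, chi \in KK -> forall g,
  Lf (chi ^ k)%CF (g ^ k) = Lf chi g.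
Proof.
move=> Kk chi KKchi g; rewrite cfConjg_id //.
by rewrite cfunJ // (subsetP (sKT chi)).
Qed.

Lemma Lf_equiv : conj_equivariant M K (M <*> E) (fun chi => chi \in KK) Lf.
Proof.
move=> chi KKchi x; rewrite norm_joinEr // => /mulsgP[m e Mm Ee ->].
have Mm' := Mm; rewrite defM in Mm'; case/mulsgP: Mm' => k v Kk Vv def_m g.
have nKk := subsetP nKM' _ (subsetP sKM _ Kk).
have nKv := subsetP nKV _ Vv; have nKe := subsetP nKE _ Ee.
have MEm : m \in M <*> E by rewrite (subsetP (joing_subl M E)).
have MEk : k \in M <*> E by rewrite (subsetP (joing_subl M E)) ?(subsetP sKM).
rewrite cfConjgMnorm ?def_m ?groupM // conjgM equiv_E //; last first.
  by apply: KK_stable; rewrite -?def_m.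
rewrite cfConjgMnorm // conjgM equiv_V //; last by apply: KK_stable.
by rewrite equiv_K.
Qed.

Lemma main_exists : exists L : forall chi : 'CF(K), 'CF(('I_M[chi])%G),
    ext_map M K (fun chi => chi \in KK) L /\
    conj_equivariant M K (M <*> E) (fun chi => chi \in KK) L.
Proof. by exists Lf; split; [exact: Lf_ext | exact: Lf_equiv]. Qed.

End Main.

Theorem proposition4p1 (gT : finGroupType) (M K K0 E V H : {group gT})
  (KK : pred 'CF(K))
  (nKM : K <| M) (nK0M : K0 <| M) (sK0K : K0 \subset K)
  (nME : E \subset 'N(M)) (nKE : E \subset 'N(K)) (nK0E : E \subset 'N(K0))
  (KK_irr : forall chi, chi \in KK -> chi \in irr K)
  (KK_stable : forall chi x, chi \in KK -> x \in M <*> E -> (chi ^ x)%CF \in KK)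
  (* (i) *)
  (hi : K :=: 'Z(K) * K0)
  (* (ii) *)
  (nVE : E \subset 'N(V))
  (defM : M :=: K * V) (defH : H :=: V :&: K) (sHZ : H \subset 'Z(K))
  (hii2 : exists L0 : forall psi : 'CF(H), 'CF(('I_V[psi])%G),
     let I0 := fun psi : 'CF(H) => exists2 lam, lam \in KK & Irr_under H K lam psi in
     ext_map V H I0 L0 /\ conj_equivariant V H (V <*> E) I0 L0)
  (* (iii) : K0 ><| epsilon(V), with V/H acting on K0 by conjugation *)
  (nVK0 : {acts (V / H), on group K0 | ('J %% H)%gact})
  (hiii : exists Leps : forall phi : 'CF(sdpair1 <[nVK0]>%gact @* K0),
                          'CF(('I_[set: sdprod_by <[nVK0]>%gact][phi])%G),
     let Ieps := fun psi : 'CF(K0) =>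
                   exists2 lam, lam \in KK & Irr_under K0 K lam psi in
     let Ieps' := fun phi => exists2 psi, Ieps psi & phi = sdlift <[nVK0]>%gact psi in
     [/\ ext_map [set: sdprod_by <[nVK0]>%gact]%G _ Ieps' Leps,
         conj_equivariant _ _ (sdpair2 <[nVK0]>%gact @* (V / H)) Ieps' Leps
       & forall psi, Ieps psi -> forall e, e \in E -> forall s,
           Leps (sdlift <[nVK0]>%gact (psi ^ e)%CF)
                (sdmap (fun a => a ^ coset H e) (fun x => x ^ e) s)
           = Leps (sdlift <[nVK0]>%gact psi) s]) :
  exists L : forall chi : 'CF(K), 'CF(('I_M[chi])%G),
    ext_map M K (fun chi => chi \in KK) L /\
    conj_equivariant M K (M <*> E) (fun chi => chi \in KK) L.
Proof.
case: hii2 => L0 [h1 h2].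
case: hiii => Leps [h3 h4 h5].
exact: (@main_exists gT M K K0 E V H KK nKM nK0M sK0K nME nKE nK0E KK_irr KK_stable hi nVE defM defH sHZ nVK0 L0 h1 h2 Leps h3 h4 h5).
Qed.
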